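(* There is no function $f:\Gamma^{\pm}(2)\to\mathbb C^\times$ such that $\overline C(h_1,h_2)=f(h_1)f(h_2)f(h_1h_2)^{-1}$ for all $h_1,h_2\in\Gamma^\pm(2)$; i.e. the restriction of the class of $\overline C$ to $\Gamma^\pm(2)$ is non-trivial.
   Context: $\Gamma^\pm(2)=\{g\in GL_2(\mathbb Z):g\equiv I\pmod 2\}$. Hilbert symbol $(x,y)_{\mathbb R}=-1$ if $x<0,y<0$, else $1$. For $g=\begin{pmatrix}a&b\\c&d\end{pmatrix}\in SL_2(\mathbb R)$: $x(g)=d$ if $c=0$, $x(g)=c$ otherwise; $\bar c(g_1,g_2)=(x(g_1),x(g_2))_{\mathbb R}(-x(g_1)x(g_2),x(g_1g_2))_{\mathbb R}$; $\nu_2(y,g)=(y,a)_{\mathbb R}$ if $c=0$ and $\nu_2(y,g)=1$ if $c\ne0$. Let $s(y)=\operatorname{diag}(1,y)$. For $h_1,h_2\in GL_2(\mathbb R)$ put $y_i=\det h_i$, $g_i=s(y_i)^{-1}h_i\in SL_2(\mathbb R)$, and $\overline C(h_1,h_2)=\nu_2(y_2,g_1)\,\bar c(s(y_2)^{-1}g_1s(y_2),g_2)$; this is the $\{\pm1\}$-valued 2-cocycle defining the two-fold cover $\overline{GL}_2(\mathbb R)$. *)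

(* Defs.v *)
From Stdlib Require Import Reals ZArith.
From Coquelicot Require Import Coquelicot.
Open Scope R_scope.

(* 2x2 real matrices [[a, b], [c, d]] *)
Record M2 := mkM2 { ma : R; mb : R; mc : R; md : R }.

Definition mmul (g h : M2) : M2 :=
  mkM2 (ma g * ma h + mb g * mc h) (ma g * mb h + mb g * md h)
       (mc g * ma h + md g * mc h) (mc g * mb h + md g * md h).

Definition mdet (g : M2) : R := ma g * md g - mb g * mc g.

Definition hilbR (x y : R) : R :=
  if Rlt_dec x 0 then (if Rlt_dec y 0 then -1 else 1) else 1.

Definition xfun (g : M2) : R := if Req_EM_T (mc g) 0 then md g else mc g.

Definition cbar (g1 g2 : M2) : R :=
  hilbR (xfun g1) (xfun g2) * hilbR (- (xfun g1 * xfun g2)) (xfun (mmul g1 g2)).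

Definition nu2 (y : R) (g : M2) : R :=
  if Req_EM_T (mc g) 0 then hilbR y (ma g) else 1.

Definition sdiag (y : R) : M2 := mkM2 1 0 0 y.
Definition sdiag_inv (y : R) : M2 := mkM2 1 0 0 (/ y).

Definition gpart (h : M2) : M2 := mmul (sdiag_inv (mdet h)) h.

Definition Cbar (h1 h2 : M2) : R :=
  let y2 := mdet h2 in
  nu2 y2 (gpart h1) * cbar (mmul (mmul (sdiag_inv y2) (gpart h1)) (sdiag y2)) (gpart h2).

Definition in_Gamma_pm2 (h : M2) : Prop :=
  exists a b c d : Z,
    ma h = IZR a /\ mb h = IZR b /\ mc h = IZR c /\ md h = IZR d /\
    (a mod 2 = 1)%Z /\ (b mod 2 = 0)%Z /\ (c mod 2 = 0)%Z /\ (d mod 2 = 1)%Z /\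
    ((a * d - b * c = 1)%Z \/ (a * d - b * c = -1)%Z).

(* Main.v *)
Require Import Defs.
From Stdlib Require Import Reals ZArith Lra Lia.
From Coquelicot Require Import Coquelicot.

Definition gA : M2 := mkM2 (-1) 0 0 (-1).
Definition gB : M2 := mkM2 (-1) 0 0 1.

Lemma inv_m1 : / -1 = -1.
Proof. field. Qed.

Ltac crunch :=
  repeat (match goal with
  | |- context [Req_EM_T ?a ?b] => destruct (Req_EM_T a b)
  | |- context [Rlt_dec ?a ?b] => destruct (Rlt_dec a b)
  end); try lra.

Lemma CAB : Cbar gA gB = 1.
Proof.
  unfold Cbar.
  replace (mdet gB) with (-1) by (unfold mdet, gB; simpl; ring).
  unfold gpart.
  replace (mdet gA) with 1 by (unfold mdet, gA; simpl; ring).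
  replace (mdet gB) with (-1) by (unfold mdet, gB; simpl; ring).
  unfold nu2, cbar, hilbR, xfun, mmul, sdiag_inv, sdiag, gA, gB; cbn.
  rewrite Rinv_1, inv_m1.
  crunch.
Qed.

Lemma CBA : Cbar gB gA = -1.
Proof.
  unfold Cbar.
  replace (mdet gA) with 1 by (unfold mdet, gA; simpl; ring).
  unfold gpart.
  replace (mdet gA) with 1 by (unfold mdet, gA; simpl; ring).
  replace (mdet gB) with (-1) by (unfold mdet, gB; simpl; ring).
  unfold nu2, cbar, hilbR, xfun, mmul, sdiag_inv, sdiag, gA, gB; cbn.
  rewrite Rinv_1, inv_m1.
  crunch.
Qed.

Lemma comm : mmul gA gB = mmul gB gA.
Proof. unfold mmul, gA, gB; cbn; f_equal; ring. Qed.

Lemma inA : in_Gamma_pm2 gA.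
Proof.
  exists (-1)%Z, 0%Z, 0%Z, (-1)%Z; unfold gA; cbn.
  repeat split; try reflexivity. left; reflexivity.
Qed.

Lemma inB : in_Gamma_pm2 gB.
Proof.
  exists (-1)%Z, 0%Z, 0%Z, 1%Z; unfold gB; cbn.
  repeat split; try reflexivity. right; reflexivity.
Qed.

Theorem mainTheorem14 :
  ~ (exists f : M2 -> C,
       (forall h, in_Gamma_pm2 h -> f h <> RtoC 0) /\
       (forall h1 h2, in_Gamma_pm2 h1 -> in_Gamma_pm2 h2 ->
          RtoC (Cbar h1 h2) = Cmult (Cmult (f h1) (f h2)) (Cinv (f (mmul h1 h2))))).
Proof.
  intros [f [_ Hf]].
  pose proof (Hf gA gB inA inB) as H1.
  pose proof (Hf gB gA inB inA) as H2.
  rewrite CAB in H1. rewrite CBA in H2.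
  rewrite <- comm in H2.
  rewrite (Cmult_comm (f gB) (f gA)) in H2.
  rewrite <- H1 in H2.
  apply (f_equal fst) in H2. simpl in H2. lra.
Qed.
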